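(* Let $m,n\ge1$ and let $A\in\{0,1\}^{m\times n}$ have exactly three ones in each row. Let $x^0,\bar x^0\in\mathrm{NPadj}(A)$ be as defined in the context. Then $x^0$ and $\bar x^0$ are adjacent vertices of $\operatorname{conv}(\mathrm{NPadj}(A))$ if and only if $F_1=\emptyset$, equivalently if and only if $\mathrm{Part}(A)=\emptyset$.
   Context: **Definition of $\mathrm{NPadj}(A)$.** Let $m,n\ge1$ and let $A\in\{0,1\}^{m\times n}$ have exactly three ones in each row. Index the coordinates of $\mathbb{R}^{3n+3}$ by $y_1,y_2,y_3$ and by $x_j,\bar x_j,x'_j$ for $j\in[n]=\{1,\dots,n\}$. Then $\mathrm{NPadj}(A)$ is the set of vectors in $\{0,1\}^{3n+3}$ satisfying: - $x_j+\bar x_j=1$ for all $j\in[n]$; - $y_1+y_2+x'_j+\bar x_j=2$ for all $j\in[n]$; - for each row of $A$, with ones in columns $i<j<k$, the equation $y_3+x_i+x'_j+x'_k=2$. **Special points and sets.** - $x^0$ is the point with $y_1=y_2=y_3=0$, $x_j=0$ and $x'_j=\bar x_j=1$ for all $j\in[n]$. - $\bar x^0=\mathbf 1-x^0$. - $F_1=\{x\in\mathrm{NPadj}(A): y_1=0,y_2=1,y_3=1\}$. - $\mathrm{Part}(A)=\{z\in\{0,1\}^n: Az=\mathbf 1\}$. Two vertices are adjacent if their convex hull is an edge (1-dimensional face) of the polytope. *)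

(* Defs.v *)
From HB Require Import structures.
From mathcomp Require Import all_boot all_order all_algebra.
Set Implicit Arguments. Unset Strict Implicit. Unset Printing Implicit Defensive.
Import Order.TTheory GRing.Theory Num.Theory.

(* Coordinates of R^(3n+3): inl k = y_(k+1);
   inr (0,j) = x_j, inr (1,j) = xbar_j, inr (2,j) = x'_j. *)
Definition coord (n : nat) := ('I_3 + 'I_3 * 'I_n)%type.
Definition o0 : 'I_3 := @Ordinal 3 0 isT.
Definition o1 : 'I_3 := @Ordinal 3 1 isT.
Definition o2 : 'I_3 := @Ordinal 3 2 isT.
Definition Yc n (k : 'I_3) : coord n := inl k.
Definition Xc n (j : 'I_n) : coord n := inr (o0, j).
Definition XBc n (j : 'I_n) : coord n := inr (o1, j).
Definition XPc n (j : 'I_n) : coord n := inr (o2, j).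

Definition pt (n : nat) := {ffun coord n -> bool}.

Definition NPadj m n (A : 'M[nat]_(m, n)) : {set pt n} :=
  [set p : pt n |
    [forall j : 'I_n, nat_of_bool (p (Xc j)) + nat_of_bool (p (XBc j)) == 1]
 && [forall j : 'I_n, nat_of_bool (p (Yc n o0)) + nat_of_bool (p (Yc n o1))
                      + nat_of_bool (p (XPc j)) + nat_of_bool (p (XBc j)) == 2]
 && [forall r : 'I_m, forall i : 'I_n, forall j : 'I_n, forall k : 'I_n,
       [&& (i < j)%N, (j < k)%N, A r i == 1, A r j == 1 & A r k == 1] ==>
       (nat_of_bool (p (Yc n o2)) + nat_of_bool (p (Xc i))
        + nat_of_bool (p (XPc j)) + nat_of_bool (p (XPc k)) == 2)]].

Definition x0 n : pt n :=
  [ffun c : coord n => match c with inl _ => false | inr (t, _) => t != o0 end].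
Definition xbar0 n : pt n := [ffun c => ~~ x0 n c].

Definition F1 m n (A : 'M[nat]_(m, n)) : {set pt n} :=
  [set p in NPadj A | [&& ~~ p (Yc n o0), p (Yc n o1) & p (Yc n o2)]].

Definition Part m n (A : 'M[nat]_(m, n)) : {set {ffun 'I_n -> bool}} :=
  [set z : {ffun 'I_n -> bool} |
     [forall r : 'I_m, \sum_(j < n) A r j * nat_of_bool (z j) == 1]].

Local Open Scope ring_scope.

Definition emb (R : realFieldType) n (p : pt n) : coord n -> R :=
  fun c => (nat_of_bool (p c))%:R.
Arguments emb R {n} p c.

Definition conv (R : realFieldType) n (S : {set pt n}) (x : coord n -> R) : Prop :=
  exists l : pt n -> R,
    [/\ forall p, 0 <= l p,
        forall p, p \notin S -> l p = 0,
        \sum_p l p = 1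
      & forall c, x c = \sum_p l p * emb R p c].
Arguments conv R {n} S x.

Definition dot (R : realFieldType) n (w x : coord n -> R) : R :=
  \sum_(c : coord n) w c * x c.
Arguments dot {R n} w x.

Definition is_face (R : realFieldType) n (S : {set pt n}) (F : (coord n -> R) -> Prop) : Prop :=
  exists w : coord n -> R, forall x,
    F x <-> (conv R S x /\ forall y, conv R S y -> dot w y <= dot w x).
Arguments is_face R {n} S F.

Definition is_vertex (R : realFieldType) n (S : {set pt n}) (u : pt n) : Prop :=
  is_face R S (fun x => forall c, x c = emb R u c).
Arguments is_vertex R {n} S u.

(* u, v adjacent vertices: distinct vertices whose convex hull (a segment,
   hence 1-dimensional) is a face *)
Definition adjacent (R : realFieldType) n (S : {set pt n}) (u v : pt n) : Prop :=
  [/\ u != v, is_vertex R S u, is_vertex R S v & is_face R S (conv R [set u; v])].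
Arguments adjacent R {n} S u v.

(* Main.v *)
Require Import Defs.
From HB Require Import structures.
From mathcomp Require Import all_boot all_order all_algebra.
From mathcomp Require Import zify ring lra.
From Stdlib Require Import FunctionalExtensionality.
Set Implicit Arguments. Unset Strict Implicit. Unset Printing Implicit Defensive.
Import Order.TTheory GRing.Theory Num.Theory.

Lemma ord3_cases (k : 'I_3) : k = o0 \/ k = o1 \/ k = o2.
Proof.
case: k => [[|[|[|k]]] Hk] //.
- by left; apply/val_inj.
- by right; left; apply/val_inj.
- by right; right; apply/val_inj.
Qed.

Lemma sum3 m n (A : 'M[nat]_(m, n)) r (i j k : 'I_n) :
  (forall i, \sum_(j < n) A i j = 3)%N ->
  (i < j)%N -> (j < k)%N -> A r i = 1%N -> A r j = 1%N -> A r k = 1%N ->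
  forall f : 'I_n -> nat, (\sum_l A r l * f l = f i + f j + f k)%N.
Proof.
move=> Hs ij jk Ai Aj Ak f.
have ji : j != i by rewrite neq_ltn ij orbT.
have ki : k != i by rewrite neq_ltn (ltn_trans ij jk) orbT.
have kj : k != j by rewrite neq_ltn jk orbT.
have H := Hs r.
rewrite (bigD1 i) // (bigD1 j) //= (bigD1 k) /=; last by rewrite ki kj.
rewrite (bigD1 i) // (bigD1 j) //= (bigD1 k) /= in H; last by rewrite ki kj.
rewrite Ai Aj Ak in H.
have H0 : (\sum_(l | (l != i) && (l != j) && (l != k)) A r l = 0)%N.
  by move: H => /eqP; rewrite !add1n !eqSS => /eqP.
move/eqP: H0; rewrite sum_nat_eq0 => /forallP H0.
rewrite big1 ?Ai ?Aj ?Ak; first lia.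
by move=> l Hl; move/implyP: (H0 l) => /(_ Hl) /eqP ->.
Qed.

Lemma triple m n (A : 'M[nat]_(m, n)) r :
  (forall i j, A i j <= 1)%N ->
  (forall i, \sum_(j < n) A i j = 3)%N ->
  exists i j k : 'I_n, [/\ (i < j)%N, (j < k)%N, A r i = 1%N, A r j = 1%N & A r k = 1%N].
Proof.
move=> Hle Hs.
pose S := [set l | A r l == 1%N].
have cS : #|S| = 3.
  rewrite -(Hs r) -sum1_card big_mkcond /=; apply: eq_bigr => l _.
  rewrite inE; have := Hle r l; case: (A r l) => [|[|]] //.
have so : sorted (fun x y : 'I_n => (x < y)%N) (enum S).
  rewrite /enum_mem; apply: sorted_filter; first by move=> x y z; apply: ltn_trans.
  by have := iota_ltn_sorted 0 n; rewrite -val_enum_ord sorted_map enumT.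
have mS : forall x, x \in enum S -> A r x = 1%N by move=> x; rewrite mem_enum inE => /eqP.
move: cS so mS; rewrite cardE; case: (enum S) => [|a [|b [|c [|]]]] //= _.
move=> /and3P [ab bc _] mS.
exists a, b, c; split => //; apply: mS; rewrite !inE eqxx ?orbT //.
Qed.

Lemma pt_ext n (p q : pt n) :
  (forall k, p (Yc n k) = q (Yc n k)) -> (forall j, p (Xc j) = q (Xc j)) ->
  (forall j, p (XBc j) = q (XBc j)) -> (forall j, p (XPc j) = q (XPc j)) -> p = q.
Proof.
move=> HY HX HB HP; apply/ffunP => [[k|[t j]]]; first exact: HY.
by case: (ord3_cases t) => [->|[->|->]]; [apply: HX|apply: HB|apply: HP].
Qed.

Lemma NP_other m n (A : 'M[nat]_(m, n)) (p : pt n) :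
  (0 < m)%N -> (forall i j, A i j <= 1)%N -> (forall i, \sum_(j < n) A i j = 3)%N ->
  p \in NPadj A -> p != x0 n -> p != xbar0 n -> exists z, z \in Part A.
Proof.
move=> m0 Hle Hs; rewrite inE => /andP [/andP [/forallP H1 /forallP H2] /forallP H3] n0 n1.
have H3' : forall r, exists i j k : 'I_n, [/\ forall f : 'I_n -> nat, (\sum_l A r l * f l = f i + f j + f k)%N &
   (p (Yc n o2) + p (Xc i) + p (XPc j) + p (XPc k) == 2)%N].
  move=> r; have [i [j [k [ij jk Ai Aj Ak]]]] := triple r Hle Hs.
  exists i, j, k; split; first exact: sum3.
  move: (H3 r) => /forallP /(_ i) /forallP /(_ j) /forallP /(_ k) /implyP; apply.
  by rewrite ij jk Ai Aj Ak.
have [i [j [k [_ Hr]]]] := H3' (Ordinal m0).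
case E0: (p (Yc n o0)); case E1: (p (Yc n o1)).
-
  have HB : forall j, p (XBc j) = false.
    by move=> l; move: (H2 l); rewrite E0 E1; case: (p (XBc l)); case: (p (XPc l)).
  have HP : forall j, p (XPc j) = false.
    by move=> l; move: (H2 l); rewrite E0 E1; case: (p (XBc l)); case: (p (XPc l)).
  have HX : forall j, p (Xc j) = true.
    by move=> l; move: (H1 l); rewrite HB; case: (p (Xc l)).
  move: Hr; rewrite HX !HP; case E2: (p (Yc n o2)) => // _.
  case/eqP: n1; apply: pt_ext => [kk|l|l|l]; rewrite !ffunE //= ?HX ?HB ?HP //.
  by case: (ord3_cases kk) => [->|[->|->]].
- pose z : {ffun 'I_n -> bool} := [ffun l => p (Xc l) == p (Yc n o2)].
  exists z; rewrite inE; apply/forallP => r.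
  have [a [b [c [Hsum Hr']]]] := H3' r.
  rewrite (Hsum (fun l => nat_of_bool (z l))) !ffunE.
  have HP : forall j, p (XPc j) = p (Xc j).
    move=> l; move: (H2 l) (H1 l); rewrite E0 E1.
    by case: (p (XBc l)); case: (p (XPc l)); case: (p (Xc l)).
  move: Hr'; rewrite !HP.
  by case: (p (Yc n o2)); case: (p (Xc a)); case: (p (Xc b)); case: (p (Xc c)).
- pose z : {ffun 'I_n -> bool} := [ffun l => p (Xc l) == p (Yc n o2)].
  exists z; rewrite inE; apply/forallP => r.
  have [a [b [c [Hsum Hr']]]] := H3' r.
  rewrite (Hsum (fun l => nat_of_bool (z l))) !ffunE.
  have HP : forall j, p (XPc j) = p (Xc j).
    move=> l; move: (H2 l) (H1 l); rewrite E0 E1.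
    by case: (p (XBc l)); case: (p (XPc l)); case: (p (Xc l)).
  move: Hr'; rewrite !HP.
  by case: (p (Yc n o2)); case: (p (Xc a)); case: (p (Xc b)); case: (p (Xc c)).
-
  have HB : forall j, p (XBc j) = true.
    by move=> l; move: (H2 l); rewrite E0 E1; case: (p (XBc l)); case: (p (XPc l)).
  have HP : forall j, p (XPc j) = true.
    by move=> l; move: (H2 l); rewrite E0 E1; case: (p (XBc l)); case: (p (XPc l)).
  have HX : forall j, p (Xc j) = false.
    by move=> l; move: (H1 l); rewrite HB; case: (p (Xc l)).
  move: Hr; rewrite HX !HP; case E2: (p (Yc n o2)) => // _.
  case/eqP: n0; apply: pt_ext => [kk|l|l|l]; rewrite !ffunE //= ?HX ?HB ?HP //.
  by case: (ord3_cases kk) => [->|[->|->]].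
Qed.

Lemma x0_in m n (A : 'M[nat]_(m, n)) : x0 n \in NPadj A.
Proof.
rewrite inE; apply/andP; split; first (apply/andP; split).
- by apply/forallP => j; rewrite !ffunE.
- by apply/forallP => j; rewrite !ffunE.
- apply/forallP => r; apply/forallP => i; apply/forallP => j; apply/forallP => k.
  by apply/implyP => _; rewrite !ffunE.
Qed.

Lemma compl_in m n (A : 'M[nat]_(m, n)) (p : pt n) :
  p \in NPadj A -> [ffun c => ~~ p c] \in NPadj A.
Proof.
rewrite !inE => /andP [/andP [/forallP H1 /forallP H2] /forallP H3].
apply/andP; split; first (apply/andP; split).
- apply/forallP => j; rewrite !ffunE; move: (H1 j).
  by case: (p (Xc j)); case: (p (XBc j)).
- apply/forallP => j; rewrite !ffunE; move: (H2 j).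
  by case: (p (Yc n o0)); case: (p (Yc n o1)); case: (p (XPc j)); case: (p (XBc j)).
- apply/forallP => r; apply/forallP => i; apply/forallP => j; apply/forallP => k.
  move: (H3 r) => /forallP /(_ i) /forallP /(_ j) /forallP /(_ k) /implyP Hi.
  apply/implyP => /Hi; rewrite !ffunE.
  by case: (p (Yc n o2)); case: (p (Xc i)); case: (p (XPc j)); case: (p (XPc k)).
Qed.

Lemma xbar0_in m n (A : 'M[nat]_(m, n)) : xbar0 n \in NPadj A.
Proof. exact: compl_in (x0_in A). Qed.

Lemma Part_F1 m n (A : 'M[nat]_(m, n)) z :
  (forall i j, A i j <= 1)%N -> (forall i, \sum_(j < n) A i j = 3)%N ->
  z \in Part A -> exists p, p \in F1 A.
Proof.
move=> Hle Hs; rewrite inE => /forallP Hz.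
pose p : pt n := [ffun c => match c with inl k => k != o0
                         | inr (t, j) => if t == o1 then ~~ z j else z j end].
exists p; rewrite inE; apply/andP; split; last by rewrite !ffunE.
rewrite inE; apply/andP; split; first (apply/andP; split).
- by apply/forallP => j; rewrite !ffunE /=; case: (z j).
- by apply/forallP => j; rewrite !ffunE /=; case: (z j).
- apply/forallP => r; apply/forallP => i; apply/forallP => j; apply/forallP => k.
  apply/implyP => /and5P [ij jk /eqP Ai /eqP Aj /eqP Ak].
  move: (Hz r); rewrite (sum3 Hs ij jk Ai Aj Ak (fun l => nat_of_bool (z l))).
  by rewrite !ffunE /=; case: (z i); case: (z j); case: (z k).
Qed.
Local Open Scope ring_scope.

Lemma sum2 (R : realFieldType) n (u v : pt n) (l : pt n -> R) (F : pt n -> R) :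
  u != v -> (forall p, p \notin [set u; v] -> l p = 0) ->
  \sum_p l p * F p = l u * F u + l v * F v.
Proof.
move=> uv Hl; rewrite (bigD1 u) //= (bigD1 v) /=; last by rewrite eq_sym.
rewrite big1 ?addr0 // => p /andP [pu pv].
by rewrite Hl ?mul0r // !inE negb_or pu pv.
Qed.

Lemma conv_pt (R : realFieldType) n (S : {set pt n}) p :
  p \in S -> conv R S (emb R p).
Proof.
move=> pS; exists (fun q => (q == p)%:R); split.
- by move=> q; rewrite ler0n.
- by move=> q qS; case: eqP => // E; rewrite E pS in qS.
- by rewrite (bigD1 p) //= eqxx big1 ?addr0 // => q /negbTE ->.
- move=> c; rewrite (bigD1 p) //= eqxx mul1r big1 ?addr0 // => q /negbTE ->.
  by rewrite mul0r.
Qed.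

Lemma xbar0E n c : xbar0 n c = ~~ x0 n c.
Proof. by rewrite ffunE. Qed.

Lemma x0_neq n : x0 n != xbar0 n.
Proof. by apply/eqP => /ffunP /(_ (Yc n o0)); rewrite !ffunE. Qed.

Lemma conv2_diff (R : realFieldType) n x :
  conv R [set x0 n; xbar0 n] x -> x (Yc n o1) = x (Yc n o0).
Proof.
move=> [l [l0 lS l1 lx]]; rewrite !lx !(sum2 _ (x0_neq n) lS).
by rewrite /emb !ffunE.
Qed.

Lemma adj_F1 (R : realFieldType) m n (A : 'M[nat]_(m, n)) :
  adjacent R (NPadj A) (x0 n) (xbar0 n) -> F1 A = set0.
Proof.
move=> [_ _ _ [w Hw]]; apply/eqP/set0Pn => [[p]].
rewrite inE => /andP [pS /and3P [/negbTE p0 p1 p2]].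
pose q : pt n := [ffun c => ~~ p c].
have qS := compl_in pS.
pose l : pt n -> R := fun r => if (r == x0 n) || (r == xbar0 n) then 2^-1 else 0.
pose h : Defs.coord n -> R := fun c => \sum_r l r * emb R r c.
have lS : forall r, r \notin [set x0 n; xbar0 n] -> l r = 0.
  by move=> r; rewrite !inE /l => /negbTE ->.
have Hh : forall c, h c = 2^-1.
  move=> c; rewrite /h (sum2 _ (x0_neq n) lS) /l !eqxx orbT /=.
  rewrite /emb xbar0E; case: (x0 n c) => /=; lra.
have hF : conv R [set x0 n; xbar0 n] h.
  exists l; split => //.
  - by move=> r; rewrite /l; case: ifP => _; lra.
  - have := sum2 (fun _ => 1) (x0_neq n) lS.
    under eq_bigr do rewrite mulr1.
    by move=> ->; rewrite /l !eqxx orbT /=; lra.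
have [hS hmax] := (Hw h).1 hF.
have Hp := hmax _ (conv_pt R pS).
have Hq := hmax _ (conv_pt R qS).
have Hsum : dot w (emb R p) + dot w (emb R q) = 2 * dot w h.
  rewrite /dot -big_split mulr_sumr /=; apply: eq_bigr => c _.
  rewrite Hh /emb ffunE; case: (p c) => /=; lra.
have pF : conv R [set x0 n; xbar0 n] (emb R p).
  apply/(Hw _).2; split; first exact: conv_pt.
  by move=> y /hmax; lra.
by move: (conv2_diff pF); rewrite /emb p0 p1 /=; lra.
Qed.

Lemma dot_ind (R : realFieldType) n (c0 : Defs.coord n) (a : R) x :
  dot (fun c => if c == c0 then a else 0) x = a * x c0.
Proof.
rewrite /dot (bigD1 c0) //= eqxx big1 ?addr0 // => c /negbTE ->; exact: mul0r.
Qed.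

Lemma conv2E (R : realFieldType) n x :
  conv R [set x0 n; xbar0 n] x ->
  exists a : R, [/\ 0 <= a, a <= 1 & forall c, x c = (1 - a) * emb R (x0 n) c + a * emb R (xbar0 n) c].
Proof.
move=> [l [l0 lS l1 lx]]; exists (l (xbar0 n)); split => //.
- have := sum2 (fun _ => 1) (x0_neq n) lS.
  under eq_bigr do rewrite mulr1.
  rewrite l1 !mulr1 => ->; have := l0 (x0 n); lra.
- move=> c; rewrite lx (sum2 _ (x0_neq n) lS).
  have := sum2 (fun _ => 1) (x0_neq n) lS.
  under eq_bigr do rewrite mulr1.
  rewrite l1 !mulr1 => E; congr (_ * _ + _); lra.
Qed.

Lemma two_adj (R : realFieldType) n (S : {set pt n}) :
  S = [set x0 n; xbar0 n] -> adjacent R S (x0 n) (xbar0 n).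
Proof.
move=> ->; have nq := x0_neq n.
have in0 : x0 n \in [set x0 n; xbar0 n] by rewrite !inE eqxx.
have in1 : xbar0 n \in [set x0 n; xbar0 n] by rewrite !inE eqxx orbT.
have ey : forall y, conv R [set x0 n; xbar0 n] y -> exists a : R,
   [/\ 0 <= a, a <= 1 & y (Yc n o0) = a].
  move=> y /conv2E [a [a0 a1 Ha]]; exists a; split => //.
  by rewrite Ha /emb xbar0E !ffunE /=; lra.
split => //.
- exists (fun c => if c == Yc n o0 then -1 else 0) => x; rewrite !dot_ind; split.
  + move=> Hx; have -> : x = emb R (x0 n) by apply: functional_extensionality.
    split; first exact: conv_pt.
    move=> y /ey [a [a0 a1 Ey]]; rewrite dot_ind Ey /emb !ffunE /=; lra.
  + move=> [/conv2E [a [a0 a1 Ha]] Hm] c.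
    have := Hm _ (conv_pt R in0); rewrite dot_ind Ha /emb xbar0E !ffunE /= => Ha0.
    have aE : a = 0 by lra.
    by rewrite Ha aE /emb !ffunE subr0 mul1r mul0r addr0.
- exists (fun c => if c == Yc n o0 then 1 else 0) => x; rewrite !dot_ind; split.
  + move=> Hx; have -> : x = emb R (xbar0 n) by apply: functional_extensionality.
    split; first exact: conv_pt.
    move=> y /ey [a [a0 a1 Ey]]; rewrite dot_ind Ey /emb xbar0E !ffunE /=; lra.
  + move=> [/conv2E [a [a0 a1 Ha]] Hm] c.
    have := Hm _ (conv_pt R in1); rewrite dot_ind Ha /emb xbar0E !ffunE /= => Ha0.
    have aE : a = 1 by lra.
    by rewrite Ha aE /emb !ffunE subrr mul0r add0r mul1r.
- exists (fun _ => 0) => x; split.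
  + by move=> Hx; split => // y _; rewrite /dot !big1 // => c _; rewrite mul0r.
  + by case.
Qed.
Local Close Scope ring_scope.

Theorem mainTheorem5 (R : realFieldType) (m n : nat) (A : 'M[nat]_(m, n)) :
  (0 < m)%N -> (0 < n)%N ->
  (forall i j, A i j <= 1)%N ->
  (forall i, \sum_(j < n) A i j = 3)%N ->
  (adjacent R (NPadj A) (x0 n) (xbar0 n) <-> F1 A = set0) /\
  (adjacent R (NPadj A) (x0 n) (xbar0 n) <-> Part A = set0).
Proof.
move=> m0 n0 Hle Hs.
have FP : F1 A = set0 -> Part A = set0.
  move=> HF; apply/eqP/set0Pn => [[z /(Part_F1 Hle Hs) [p]]].
  by rewrite HF inE.
have PF : Part A = set0 -> F1 A = set0.
  move=> HP; apply/eqP/set0Pn => [[p]]; rewrite inE => /andP [pS /and3P [p0 p1 _]].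
  have np0 : p != x0 n by apply/eqP => E; move: p1; rewrite E ffunE.
  have np1 : p != xbar0 n by apply/eqP => E; move: p0; rewrite E !ffunE.
  have [z] := NP_other m0 Hle Hs pS np0 np1.
  by rewrite HP inE.
have PA : Part A = set0 -> adjacent R (NPadj A) (x0 n) (xbar0 n).
  move=> HP; apply: two_adj; apply/setP => p; rewrite in_set2.
  have [->|np0] := eqVneq p (x0 n); first by rewrite x0_in.
  have [->|np1] := eqVneq p (xbar0 n); first by rewrite xbar0_in.
  apply/negbTE/negP => pS.
  have [z] := NP_other m0 Hle Hs pS np0 np1.
  by rewrite HP inE.
split; split.
- exact: adj_F1.
- by move/FP; exact: PA.
- by move/adj_F1; exact: FP.
- exact: PA.
Qed.
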